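(* Let $P_0$ be a distribution of $(Y,\mathbf{X},\mathbf{Z})$ as in the context, with error density $g_0$ and expectation $E_0$. Define \[ I_{\mathrm{add}}=I_{g_0}\,E_0[\mathbf{X}-\boldsymbol\eta(\mathbf{Z})][\mathbf{X}-\boldsymbol\eta(\mathbf{Z})]^\top,\qquad I_{\mathrm{PL}}=I_{g_0}\,E_0[\mathbf{X}-E_0(\mathbf{X}\mid\mathbf{Z})][\mathbf{X}-E_0(\mathbf{X}\mid\mathbf{Z})]^\top . \] Suppose $I_{\mathrm{PL}}$ is positive definite. Then $I_{\mathrm{add}}^{-1}<I_{\mathrm{PL}}^{-1}$ unless \[ E_0[\boldsymbol\eta(\mathbf{Z})-E_0(\mathbf{X}\mid\mathbf{Z})][\boldsymbol\eta(\mathbf{Z})-E_0(\mathbf{X}\mid\mathbf{Z})]^\top=\mathbf{O}, \] where $\mathbf{O}$ is the $p\times p$ zero matrix. Here, for symmetric matrices, $A<B$ means that $B-A$ is non-negative definite and $A\neq B$.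
   Context: Data model: $(Y,\mathbf{X},\mathbf{Z})$ with $\mathbf{X}\in\mathbb{R}^p$ and $\mathbf{Z}\in\mathbb{R}^d$ satisfies $Y=\mathbf{X}^\top\boldsymbol\beta^0+m^0(\mathbf{Z})+\epsilon$. The error $\epsilon$ is independent of $(\mathbf{X},\mathbf{Z})$ and has a symmetric, absolutely continuous density $g_0$ with $I_{g_0}=\int (g_0')^2/g_0<\infty$. $(\mathbf{X},\mathbf{Z})$ has a joint density $q_0$ (with respect to a $\sigma$-finite measure times Lebesgue measure), and $\mathbf{Z}$ has compact support $[0,1]^d$. $\mathcal{H}(q_0)$ is the closed subspace of $L_2(q_0)$ of functions $m(\mathbf{z})=\sum_{j=1}^d m_j(z_j)$ with $E_0 m_j(Z_j)=0$ for all $j$. Set $\boldsymbol\eta=(\eta_1,\ldots,\eta_p)^\top$, where $\eta_j$ is the $L_2(q_0)$-projection of $\mathbf{z}\mapsto E_0(X_j\mid\mathbf{Z}=\mathbf{z})$ onto $\mathcal{H}(q_0)$. Interpretation: $I_{\mathrm{add}}$ is the semi-parametric information bound for $\boldsymbol\beta$ in the partially linear additive model, where $m^0$ is additive. $I_{\mathrm{PL}}$ is the bound in the partially linear model, where $m^0$ is an arbitrary function of $\mathbf{Z}$. *)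

(* Defs.v *)
From HB Require Import structures.
From mathcomp Require Import all_boot all_order all_algebra.
From mathcomp Require Import all_classical all_reals all_analysis.
Set Implicit Arguments. Unset Strict Implicit. Unset Printing Implicit Defensive.
Import Order.TTheory GRing.Theory Num.Theory.
Import numFieldNormedType.Exports.
Local Open Scope classical_set_scope.
Local Open Scope ring_scope.

Section defs.
Context {d0 : measure_display} {Omega : measurableType d0} {R : realType}.

Definition sigma_gen (n : nat) (F : 'I_n -> Omega -> R) : set (set Omega) :=
  g_sigma_preimage F.

Definition sigma_gen1 (f : Omega -> R) : set (set Omega) :=
  <<s preimage_set_system setT f measurable >>.

Definition measurable_wrt (G : set (set Omega)) (W : Omega -> R) : Prop :=
  forall B : set R, measurable B -> G (W @^-1` B).

Definition Ex (P : probability Omega R) (f : Omega -> R) : R := fine ('E_P[f])%E.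

Definition is_cond_exp (P : probability Omega R) (G : set (set Omega))
    (X m : Omega -> R) : Prop :=
  [/\ measurable_wrt G m, m \in Lfun P 1%:E &
      forall A, G A -> (\int[P]_(w in A) (X w)%:E = \int[P]_(w in A) (m w)%:E)%E].

(* h belongs to H(q0): h(Z) = sum_k h_k(Z_k), h_k(Z_k) square integrable with
   E h_k(Z_k) = 0 *)
Definition in_additive_space (P : probability Omega R) (d : nat)
    (Z : 'I_d -> Omega -> R) (h : Omega -> R) : Prop :=
  exists c : 'I_d -> Omega -> R,
    (forall k, [/\ measurable_wrt (sigma_gen1 (Z k)) (c k),
                  c k \in Lfun P 2%:E & Ex P (c k) = 0]) /\
    (forall w, h w = \sum_(k < d) c k w).

Definition is_proj_additive (P : probability Omega R) (d : nat)
    (Z : 'I_d -> Omega -> R) (m eta : Omega -> R) : Prop :=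
  in_additive_space P Z eta /\
  forall h, in_additive_space P Z h -> Ex P (fun w => (m w - eta w) * h w) = 0.

Definition second_moment_mx (P : probability Omega R) (p : nat)
    (U : 'I_p -> Omega -> R) : 'M[R]_p :=
  \matrix_(i, j) Ex P (fun w => U i w * U j w).

Definition indep_of (P : probability Omega R) (eps : Omega -> R)
    (G : set (set Omega)) : Prop :=
  forall B : set R, measurable B -> forall A, G A ->
    P (eps @^-1` B `&` A) = (P (eps @^-1` B) * P A)%E.

Definition has_density (P : probability Omega R) (eps : Omega -> R) (g : R -> R) :
  Prop :=
  [/\ forall x, 0 <= g x, measurable_fun setT g &
      forall B : set R, measurable B ->
        P (eps @^-1` B) = (\int[lebesgue_measure]_(x in B) (g x)%:E)%E].

End defs.

Section realdefs.
Context {R : realType}.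

Definition abs_cont_with_deriv (g g' : R -> R) : Prop :=
  forall a b : R, a <= b ->
    (lebesgue_measure : measure _ R).-integrable `[a, b] (EFin \o g') /\
    g b - g a = \int[lebesgue_measure]_(x in `[a, b]) g' x.

Definition fisher_info_e (g g' : R -> R) : \bar R :=
  (\int[lebesgue_measure]_(x in [set x | (0 < g x)%R]) ((g' x) ^+ 2 / g x)%:E)%E.

Definition fisher_info (g g' : R -> R) : R := fine (fisher_info_e g g').

Definition nonneg_def (p : nat) (A : 'M[R]_p) : Prop :=
  forall v : 'cV[R]_p, 0 <= (v^T *m A *m v) ord0 ord0.

Definition pos_def (p : nat) (A : 'M[R]_p) : Prop :=
  forall v : 'cV[R]_p, v != 0 -> 0 < (v^T *m A *m v) ord0 ord0.

Definition loewner_lt (p : nat) (A B : 'M[R]_p) : Prop :=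
  nonneg_def (B - A) /\ A != B.

End realdefs.

(* Main.v *)
Require Import Defs.
From HB Require Import structures.
From mathcomp Require Import all_boot all_order all_algebra.
From mathcomp Require Import all_classical all_reals all_analysis.
From mathcomp Require Import measurable_realfun.
From mathcomp Require Import lra ring.
Import Order.TTheory GRing.Theory Num.Theory.
Import numFieldNormedType.Exports.
Local Open Scope classical_set_scope.
Local Open Scope ring_scope.
Set Implicit Arguments. Unset Strict Implicit. Unset Printing Implicit Defensive.

Section Basics.
Context {d : measure_display} {T : measurableType d} {R : realType}.
Variable P : probability T R.
Implicit Types f g : T -> R.

Local Notation Int f := (P.-integrable setT (EFin \o f)).
Definition L2 (f : T -> R) := measurable_fun setT f /\ Int (fun x => f x ^+ 2).
Definition E (f : T -> R) : R := Rintegral P setT f.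

Lemma ExE f : Ex P f = E f.
Proof. by rewrite /Ex /E /Rintegral unlock. Qed.

Lemma Int_meas f : Int f -> measurable_fun setT f.
Proof. by move=> /integrableP[/measurable_EFinP]. Qed.


Lemma Int_dom f g : measurable_fun setT f -> Int g ->
  (forall x, `|f x| <= g x) -> Int f.
Proof.
move=> mf ig fg; apply: le_integrable ig => //.
  exact/measurable_EFinP.
move=> x _ /=; rewrite lee_fin (le_trans (fg x))//.
exact: ler_norm.
Qed.

Lemma Int_ext f g : Int f -> (forall x, f x = g x) -> Int g.
Proof.
move=> hf fg; move: hf; apply: (eq_integrable measurableT) => x _ /=; by rewrite fg.
Qed.

Lemma Int_of (F : T -> \bar R) g : P.-integrable setT F ->
  (forall x, F x = (g x)%:E) -> Int g.
Proof.
move=> hf fg; move: hf; apply: (eq_integrable measurableT) => x _ /=; by rewrite fg.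
Qed.


Lemma Int_add f g : Int f -> Int g -> Int (fun x => f x + g x).
Proof. move=> hf hg; have h := integrableD measurableT hf hg. by apply: (Int_of h). Qed.

Lemma Int_scale k f : Int f -> Int (fun x => k * f x).
Proof. move=> hf; have h := integrableZl measurableT k hf; by apply: (Int_of h). Qed.

Lemma Int_opp f : Int f -> Int (fun x => - f x).
Proof.
move=> hf; apply: (Int_ext (Int_scale (-1) hf)) => x.
by rewrite mulN1r.
Qed.

Lemma Int_sub f g : Int f -> Int g -> Int (fun x => f x - g x).
Proof. by move=> hf hg; exact: Int_add hf (Int_opp hg). Qed.

Lemma Int_cst k : Int (fun _ => k).
Proof. exact: finite_measure_integrable_cst. Qed.

Lemma Int_sum (I : Type) (s : seq I) (F : I -> T -> R) :
  (forall i, Int (F i)) -> Int (fun x => \sum_(i <- s) F i x).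
Proof.
move=> hF; elim: s => [|i s ih].
  by apply: (Int_ext (Int_cst 0)) => x; rewrite big_nil.
apply: (Int_ext (Int_add (hF i) ih)) => x.
by rewrite big_cons.
Qed.

Lemma E_add f g : Int f -> Int g -> E (fun x => f x + g x) = E f + E g.
Proof. by move=> hf hg; rewrite /E RintegralD. Qed.

Lemma E_sub f g : Int f -> Int g -> E (fun x => f x - g x) = E f - E g.
Proof. by move=> hf hg; rewrite /E RintegralB. Qed.

Lemma E_scale k f : Int f -> E (fun x => k * f x) = k * E f.
Proof. by move=> hf; rewrite /E RintegralZl. Qed.

Lemma E_cst k : E (fun _ => k) = k.
Proof.
rewrite /E Rintegral_cst //.
suff h : fine (P [set: T]) = 1 by rewrite -[X in _ = X]mulr1 -h.
by rewrite probability_setT.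
Qed.

Lemma E_ext f g : (forall x, f x = g x) -> E f = E g.
Proof. by move=> fg; rewrite /E; apply: eq_Rintegral => x _; rewrite fg. Qed.

Lemma E_sum (I : Type) (s : seq I) (F : I -> T -> R) :
  (forall i, Int (F i)) -> E (fun x => \sum_(i <- s) F i x) = \sum_(i <- s) E (F i).
Proof.
move=> hF; elim: s => [|i s ih].
  rewrite big_nil (E_ext (g := fun _ => 0)) ?E_cst // => x.
  by rewrite big_nil.
rewrite big_cons -ih -E_add //; last exact: Int_sum.
by rewrite /E; apply: eq_Rintegral => x _; rewrite big_cons.
Qed.

Lemma E_le f g : Int f -> Int g -> (forall x, f x <= g x) -> E f <= E g.
Proof. by move=> hf hg fg; rewrite /E le_Rintegral. Qed.

Lemma E_ge0 f : (forall x, 0 <= f x) -> 0 <= E f.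
Proof. by move=> f0; rewrite /E Rintegral_ge0. Qed.

Lemma E_abs f : Int f -> `|E f| <= E (fun x => `|f x|).
Proof. by move=> hf; rewrite /E le_normr_Rintegral. Qed.




Lemma ineq_abs1 (a : R) : `|a| <= 1 + a ^+ 2.
Proof.
rewrite -(real_normK (num_real a)); have := normr_ge0 a; move: `|a| => u u0; nra.
Qed.

Lemma ineq_absM (a b : R) : `|a * b| <= a ^+ 2 + b ^+ 2.
Proof.
rewrite normrM -(real_normK (num_real a)) -(real_normK (num_real b)).
have := normr_ge0 a; have := normr_ge0 b; move: `|a| `|b| => u v v0 u0; nra.
Qed.

Lemma ineq_sqrD (a b : R) : `|(a + b) ^+ 2| <= 2 * a ^+ 2 + 2 * b ^+ 2.
Proof. rewrite ger0_norm ?sqr_ge0 //; have := sqr_ge0 (a - b); nra. Qed.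

Lemma L2_Int f : L2 f -> Int f.
Proof.
move=> [mf i2]; apply: (Int_dom mf (Int_add (Int_cst 1) i2)) => x.
exact: ineq_abs1.
Qed.

Lemma L2_mul f g : L2 f -> L2 g -> Int (fun x => f x * g x).
Proof.
move=> [mf i2] [mg j2]; apply: (Int_dom _ (Int_add i2 j2)).
  exact: measurable_funM.
move=> x; exact: ineq_absM.
Qed.

Lemma L2_add f g : L2 f -> L2 g -> L2 (fun x => f x + g x).
Proof.
move=> [mf i2] [mg j2]; have mfg : measurable_fun setT (fun x => f x + g x).
  exact: measurable_funD.
split => //; apply: (Int_dom _ (Int_add (Int_scale 2 i2) (Int_scale 2 j2))).
  exact: measurable_funX.
move=> x; exact: ineq_sqrD.
Qed.

Lemma L2_scale k f : L2 f -> L2 (fun x => k * f x).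
Proof.
move=> [mf i2]; split; first exact: measurable_funM.
apply: (Int_ext (Int_scale (k ^+ 2) i2)) => x; by rewrite exprMn.
Qed.

Lemma L2_opp f : L2 f -> L2 (fun x => - f x).
Proof.
move=> /(L2_scale (-1)) [mf i2]; split.
  by apply: eq_measurable_fun mf => x _; rewrite mulN1r.
by apply: (Int_ext i2) => x; rewrite mulN1r.
Qed.

Lemma L2_sub f g : L2 f -> L2 g -> L2 (fun x => f x - g x).
Proof. by move=> hf hg; apply: L2_add hf (L2_opp hg). Qed.

Lemma L2_cst k : L2 (fun _ => k).
Proof. by split; [exact: measurable_cst| exact: Int_cst]. Qed.

Lemma L2_sum (I : Type) (s : seq I) (F : I -> T -> R) :
  (forall i, L2 (F i)) -> L2 (fun x => \sum_(i <- s) F i x).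
Proof.
move=> hF; elim: s => [|i s ih].
  have [m1 i1] := L2_cst 0; split.
    by apply: eq_measurable_fun m1 => x _; rewrite big_nil.
  by apply: (Int_ext i1) => x; rewrite big_nil.
have [m1 i1] := L2_add (hF i) ih; split.
  by apply: eq_measurable_fun m1 => x _; rewrite big_cons.
by apply: (Int_ext i1) => x; rewrite big_cons.
Qed.

Lemma L2_ext f g : L2 f -> (forall x, f x = g x) -> L2 g.
Proof.
move=> [m1 i1] fg; split.
  by apply: eq_measurable_fun m1 => x _; rewrite fg.
by apply: (Int_ext i1) => x; rewrite fg.
Qed.

Lemma Lfun2_L2 f : f \in Lfun P 2%:E -> L2 f.
Proof.
move=> hf; split; last exact: Lfun2_integrable_sqr.
by move: hf; rewrite inE => /andP[]; rewrite inE.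
Qed.

Lemma Lfun1_Int f : f \in Lfun P 1 -> Int f.
Proof. by move/Lfun1_integrable. Qed.

Definition Scount (dl x : R) (N : nat) : R :=
  \sum_(k < N) (if (k.+1)%:R * dl <= x then dl else 0).

Lemma Scount_ge0 dl x N : 0 <= dl -> 0 <= Scount dl x N.
Proof. by move=> d0; apply: sumr_ge0 => k _; case: ifP. Qed.

Lemma Scount_le dl x N : 0 <= dl -> Scount dl x N <= N%:R * dl.
Proof.
move=> d0; rewrite /Scount.
apply: le_trans (_ : \sum_(k < N) dl <= _).
  by apply: ler_sum => k _; case: ifP.
by rewrite sumr_const card_ord mulr_natl.
Qed.

Lemma Scount_full dl x N : 0 <= dl -> N%:R * dl <= x -> Scount dl x N = N%:R * dl.
Proof.
move=> d0 hx; rewrite /Scount (eq_bigr (fun _ => dl)).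
  by rewrite sumr_const card_ord mulr_natl.
move=> k _; rewrite ifT //; apply: le_trans hx.
by rewrite ler_wpM2r // ler_nat ltn_ord.
Qed.

Lemma ScountS dl x N :
  Scount dl x N.+1 = Scount dl x N + (if (N.+1)%:R * dl <= x then dl else 0).
Proof. by rewrite /Scount big_ord_recr. Qed.

Lemma Scount_lex dl x N : 0 <= dl -> 0 <= x -> Scount dl x N <= x.
Proof.
move=> d0 x0; elim: N => [|N ih]; first by rewrite /Scount big_ord0.
rewrite ScountS; case: ifP => hN; last by rewrite addr0.
apply: le_trans hN; rewrite mulrSr mulrDl mul1r lerD2r.
exact: Scount_le.
Qed.

Lemma Scount_err dl x N : 0 <= dl -> 0 <= x -> x <= N%:R * dl ->
  x - Scount dl x N <= dl.
Proof.
move=> d0 x0; elim: N => [|N ih].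
  rewrite mul0r => hx; have -> : x = 0 by apply/eqP; rewrite eq_le hx x0.
  by rewrite /Scount big_ord0 subr0.
move=> hx; have [hN|hN] := leP x (N%:R * dl).
  apply: le_trans (ih hN); rewrite lerD2l lerN2 ScountS lerDl.
  by case: ifP.
rewrite ScountS Scount_full //; last exact: ltW.
apply: le_trans (_ : x - N%:R * dl <= _).
  by rewrite lerD2l lerN2 lerDl; case: ifP.
by rewrite lerBlDl; apply: (le_trans hx); rewrite -natr1 mulrDl mul1r.
Qed.

Lemma Int_dom' f g : measurable_fun setT f -> Int g ->
  (forall x, `|f x| <= `|g x|) -> Int f.
Proof.
move=> mf ig fg; apply: le_integrable ig => //.
  exact/measurable_EFinP.
by move=> x _ /=; rewrite lee_fin.
Qed.

Lemma Int_abs f : Int f -> Int (fun x => `|f x|).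
Proof.
move=> hf; apply: (Int_dom' _ hf) => x; last by rewrite normr_id.
by apply: measurableT_comp => //; exact: Int_meas.
Qed.

Lemma Int_bdd f (u : T -> R) (M : R) : Int f -> measurable_fun setT u ->
  (forall x, `|u x| <= M) -> Int (fun x => f x * u x).
Proof.
move=> hf mu hu; apply: (Int_dom _ (Int_scale M (Int_abs hf))).
  by apply: measurable_funM => //; exact: Int_meas.
move=> x; rewrite normrM mulrC ler_wpM2r //.
Qed.

Lemma E_abs_le f g : Int f -> Int g -> (forall x, `|f x| <= g x) -> `|E f| <= E g.
Proof.
move=> hf hg fg; apply: le_trans (E_abs hf) _.
by apply: E_le => //; exact: Int_abs.
Qed.

Lemma eq0_of_small (D C : R) : 0 <= C ->
  (forall n : nat, `|D| <= C / (n.+1)%:R) -> D = 0.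
Proof.
move=> C0 h; apply/eqP/negPn/negP => D0.
have Dp : 0 < `|D| by rewrite normr_gt0.
have hb := archi_boundP (divr_ge0 C0 (ltW Dp)).
set n := Num.Def.archi_bound _ in hb.
have := h n; rewrite ler_pdivlMr ?ltr0n // => h2.
have : C < `|D| * (n.+1)%:R.
  rewrite -ltr_pdivrMl // mulrC; apply: lt_le_trans hb _.
  by rewrite ler_nat.
by rewrite ltNge h2.
Qed.

Lemma E_indic f (A : set T) : measurable A ->
  E (fun x => f x * \1_A x) = fine (\int[P]_(x in A) (f x)%:E)%E.
Proof.
move=> mA; rewrite /E /Rintegral [in RHS]integral_mkcond; congr fine.
apply: eq_integral => x _; rewrite /patch indicE; case: (_ \in _) => /=.
  by rewrite mulr1.
by rewrite mulr0.
Qed.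

Lemma quad_form (p : nat) (W : 'I_p -> T -> R) (v : 'cV[R]_p) :
  (forall i, L2 (W i)) ->
  (v^T *m second_moment_mx P W *m v) ord0 ord0 =
  E (fun x => (\sum_i v i ord0 * W i x) ^+ 2).
Proof.
move=> hW.
have hI i j : Int (fun x => v i ord0 * v j ord0 * (W i x * W j x)).
  by apply: Int_scale; apply: L2_mul.
rewrite (E_ext (g := fun x => \sum_i \sum_j
   v i ord0 * v j ord0 * (W i x * W j x))); last first.
  move=> x; rewrite expr2 big_distrl /=; apply: eq_bigr => i _.
  rewrite big_distrr /=; apply: eq_bigr => j _.
  by rewrite mulrACA.
rewrite E_sum; last by move=> i; apply: Int_sum.
rewrite mxE.
transitivity (\sum_j \sum_i v i ord0 * v j ord0 * E (fun x => W i x * W j x)).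
  apply: eq_bigr => j _; rewrite !mxE big_distrl /=; apply: eq_bigr => i _.
  by rewrite !mxE ExE mulrAC.
rewrite exchange_big /=; apply: eq_bigr => i _.
rewrite E_sum //; apply: eq_bigr => j _.
by rewrite E_scale //; exact: L2_mul.
Qed.

Section CE.
Variable H : set (set T).
Hypothesis HG : forall A, <<s H >> A -> measurable A.
Local Notation TG := (g_sigma_algebraType H).
Local Notation Gmeas f := (@measurable_fun _ _ TG R setT f).

Lemma Gmeas_meas f : Gmeas f -> measurable_fun setT f.
Proof. by move=> mf _ B mB; apply: HG; exact: (mf measurableT B mB). Qed.

Lemma Gset_ge f t : Gmeas f -> <<s H >> [set x | t <= f x].
Proof.
move=> mf; have := mf measurableT _ (measurable_itv `[t, +oo[).
rewrite setTI; congr (<<s H >> _); apply/seteqP; split => x /=;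
  by rewrite in_itv /= andbT.
Qed.

Lemma Gset_abs f K : Gmeas f -> <<s H >> [set x | `|f x| <= K].
Proof.
move=> mf; have mnf : Gmeas (fun x => `|f x|) by apply: measurableT_comp.
have := mnf measurableT _ (measurable_itv `]-oo, K]).
rewrite setTI; congr (<<s H >> _); apply/seteqP; split => x /=;
  by rewrite in_itv /=.
Qed.

Variables (Y c : T -> R).
Hypotheses (hY : L2 Y) (hcm : Gmeas c) (hci : Int c).
Hypothesis hset : forall A, <<s H >> A ->
  E (fun x => Y x * \1_A x) = E (fun x => c x * \1_A x).

Lemma hYi : Int Y. Proof. exact: L2_Int. Qed.

Section BL.
Variables (g : T -> R) (M : R).
Hypotheses (hg : Gmeas g) (gb : forall x, 0 <= g x <= M).

Let mg : measurable_fun setT g := Gmeas_meas hg.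
Let M0 : 0 <= M. Proof. by have /andP[h1 h2] := gb point; exact: le_trans h2. Qed.

Definition Bk (dl : R) (k : nat) := [set x | (k.+1)%:R * dl <= g x].

Lemma mBk dl k : measurable (Bk dl k).
Proof. exact: HG (Gset_ge _ hg). Qed.

Lemma Scount_indic dl N x :
  Scount dl (g x) N = \sum_(k < N) dl * \1_(Bk dl k) x.
Proof.
apply: eq_bigr => k _; rewrite indicE.
case: ifP => h.
  by rewrite mem_set // mulr1.
rewrite memNset ?mulr0 //= => h'; by rewrite h' in h.
Qed.

Lemma mScount dl N : measurable_fun setT (fun x => Scount dl (g x) N).
Proof.
apply: (eq_measurable_fun (fun x => \sum_(k < N) dl * \1_(Bk dl k) x)).
  by move=> x _; rewrite Scount_indic.
apply: measurable_sum => k; apply: measurable_funM => //.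
exact: measurable_indic (mBk dl k).
Qed.

Lemma E_Scount F dl N : Int F ->
  E (fun x => F x * Scount dl (g x) N) =
  \sum_(k < N) dl * E (fun x => F x * \1_(Bk dl k) x).
Proof.
move=> hF.
have hI0 k : Int (fun x => F x * \1_(Bk dl k) x).
  apply: (Int_bdd (M := 1)) hF _ _.
    exact: measurable_indic (mBk dl k).
  by move=> x; rewrite indicE; case: (_ \in _); rewrite ?normr1 ?normr0.
have hI k : Int (fun x => dl * (F x * \1_(Bk dl k) x)) by apply: Int_scale.
rewrite (E_ext (g := fun x => \sum_(k < N) dl * (F x * \1_(Bk dl k) x))).
  rewrite E_sum //; apply: eq_bigr => k _.
  exact: E_scale (hI0 k).
move=> x; rewrite Scount_indic big_distrr /=; apply: eq_bigr => k _.
by rewrite mulrCA.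
Qed.

Lemma approx_err F n : Int F ->
  `|E (fun x => F x * g x) - E (fun x => F x * Scount ((M + 1) / (n.+1)%:R) (g x) n.+1)|
    <= (M + 1) / (n.+1)%:R * E (fun x => `|F x|).
Proof.
move=> hF; set dl := (M + 1) / (n.+1)%:R.
have dl0 : 0 <= dl by rewrite divr_ge0 // addr_ge0.
have ndl : (n.+1)%:R * dl = M + 1 by rewrite mulrC divfK // pnatr_eq0.
have h1 : Int (fun x => F x * g x).
  apply: (Int_bdd (M := M)) hF mg _ => x.
  by have /andP[a b] := gb x; rewrite ger0_norm.
have h2 : Int (fun x => F x * Scount dl (g x) n.+1).
  apply: (Int_bdd (M := (n.+1)%:R * dl)) hF (mScount _ _) _ => x.
  by rewrite ger0_norm ?Scount_ge0 // Scount_le.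
rewrite -E_sub // -E_scale; last exact: Int_abs.
apply: E_abs_le.
- exact: Int_sub.
- by apply: Int_scale; exact: Int_abs.
move=> x /=; rewrite -mulrBr normrM mulrC ler_wpM2r //.
have /andP[a b] := gb x.
rewrite ger0_norm; last by rewrite subr_ge0 Scount_lex.
apply: Scount_err => //; rewrite ndl; apply: le_trans b _; by rewrite lerDl.
Qed.

Lemma BL : E (fun x => Y x * g x) = E (fun x => c x * g x).
Proof.
apply/eqP; rewrite -subr_eq0; apply/eqP.
apply: (@eq0_of_small _ ((M + 1) * (E (fun x => `|Y x|) + E (fun x => `|c x|)))).
  by rewrite mulr_ge0 ?addr_ge0 ?E_ge0.
move=> n; set dl := (M + 1) / (n.+1)%:R.
have eS : E (fun x => Y x * Scount dl (g x) n.+1) = E (fun x => c x * Scount dl (g x) n.+1).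
  rewrite !E_Scount //; last exact: hYi.
  apply: eq_bigr => k _; congr (_ * _); apply: hset; exact: Gset_ge.
have := approx_err n hYi; have := approx_err n hci; rewrite -/dl => hc hy.
rewrite mulrAC -/dl mulrDr.
apply: le_trans (_ : `|E (fun x => Y x * g x) - E (fun x => Y x * Scount dl (g x) n.+1)| +
  `|E (fun x => c x * g x) - E (fun x => c x * Scount dl (g x) n.+1)| <= _); last first.
  exact: lerD.
apply: le_trans (ler_normB _ _); rewrite eS.
by rewrite opprB addrA subrK.
Qed.

End BL.
Lemma BL2 (h : T -> R) (K : R) : Gmeas h -> 0 <= K ->
  E (fun x => Y x * (h x * \1_[set x | `|h x| <= K] x)) =
  E (fun x => c x * (h x * \1_[set x | `|h x| <= K] x)).
Proof.
move=> hm K0; set A := [set x | `|h x| <= K].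
have GA : <<s H >> A by exact: Gset_abs.
have mA : measurable A by exact: HG.
have mh : measurable_fun setT h := Gmeas_meas hm.
have mI : measurable_fun setT (\1_A : T -> R) by exact: measurable_indic.
have bI x : `|(\1_A : T -> R) x| <= 1.
  by rewrite indicE; case: (_ \in _); rewrite ?normr1 ?normr0.
set g := fun x => (h x + K) * \1_A x.
have gm : Gmeas g.
  apply: measurable_funM; first by apply: measurable_funD => //; exact: measurable_cst.
  exact: (@measurable_indic _ TG R setT A GA).
have gb x : 0 <= g x <= K + K.
  rewrite /g indicE; case: (boolP (x \in A)) => xA; last by rewrite mulr0 lexx addr_ge0.
  have := set_mem xA; rewrite /A /= => hx; rewrite mulr1.
  by move: hx; rewrite ler_norml => /andP[a b]; apply/andP; split; lra.
have key F : Int F -> E (fun x => F x * (h x * \1_A x)) =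
    E (fun x => F x * g x) - K * E (fun x => F x * \1_A x).
  move=> hF.
  have i1 : Int (fun x => F x * g x).
    apply: (Int_bdd (M := K + K)) hF (Gmeas_meas gm) _ => x.
    by have /andP[a b] := gb x; rewrite ger0_norm.
  have i2 : Int (fun x => F x * \1_A x) by apply: (Int_bdd (M := 1)) hF mI _.
  rewrite -E_scale // -E_sub //; last exact: Int_scale.
  apply: E_ext => x; rewrite /g; lra.
rewrite !key //; last exact: hYi.
by rewrite (BL gm gb) hset.
Qed.

Lemma c_trunc_bound (K : R) : 0 <= K ->
  E (fun x => c x ^+ 2 * \1_[set x | `|c x| <= K] x) <= E (fun x => Y x ^+ 2).
Proof.
move=> K0; set A := [set x | `|c x| <= K].
have hb : E (fun x => Y x * (c x * \1_A x)) = E (fun x => c x * (c x * \1_A x)).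
  exact: BL2 hcm K0.
have mA : measurable A by exact: HG (Gset_abs _ hcm).
have mc : measurable_fun setT c := Gmeas_meas hcm.
have mI : measurable_fun setT (\1_A : T -> R) by exact: measurable_indic.
have eI x : (\1_A x : R) ^+ 2 = \1_A x.
  by rewrite indicE; case: (_ \in _); rewrite ?expr1n ?expr0n.
have bq x : `|c x * \1_A x| <= K.
  rewrite indicE; case: (boolP (x \in A)) => xA; last by rewrite mulr0 normr0.
  by rewrite mulr1; exact: set_mem xA.
have iq : Int (fun x => c x ^+ 2 * \1_A x).
  apply: (Int_ext (Int_bdd (M := K) hci (measurable_funM mc mI) bq)) => x.
  by rewrite mulrA -expr2.
have iy : Int (fun x => Y x * (c x * \1_A x)) by apply: (Int_bdd (M := K)) hYi _ bq; exact: measurable_funM.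
have [_ iy2] := hY.
have eq1 : E (fun x => c x ^+ 2 * \1_A x) = E (fun x => Y x * (c x * \1_A x)).
  by rewrite hb; apply: E_ext => x; rewrite mulrA -expr2.
have : E (fun x => Y x * (c x * \1_A x)) <=
    E (fun x => (Y x ^+ 2 + c x ^+ 2 * \1_A x) / 2).
  apply: E_le => //.
    rewrite (_ : (fun x => _) = (fun x => 2^-1 * (Y x ^+ 2 + c x ^+ 2 * \1_A x))).
      by apply: Int_scale; exact: Int_add.
    by apply: funext => x; rewrite mulrC.
  move=> x; have e : c x ^+ 2 * \1_A x = (c x * \1_A x) ^+ 2 by rewrite exprMn eI.
  rewrite e.
  have := sqr_ge0 (Y x - c x * \1_A x); move: (c x * \1_A x) => u; nra.
rewrite (@E_ext (fun x => (Y x ^+ 2 + c x ^+ 2 * \1_A x) / 2)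
   (fun x => 2^-1 * (Y x ^+ 2 + c x ^+ 2 * \1_A x))); last by move=> x; rewrite mulrC.
rewrite E_scale; last exact: Int_add.
rewrite E_add // -eq1; lra.
Qed.

Lemma Int_trunc (K : R) : 0 <= K ->
  Int (fun x => c x ^+ 2 * \1_[set x | `|c x| <= K] x).
Proof.
move=> K0; set A := [set x | `|c x| <= K].
have mA : measurable A by exact: HG (Gset_abs _ hcm).
have mc : measurable_fun setT c := Gmeas_meas hcm.
have mI : measurable_fun setT (\1_A : T -> R) by exact: measurable_indic.
have bq x : `|c x * \1_A x| <= K.
  rewrite indicE; case: (boolP (x \in A)) => xA; last by rewrite mulr0 normr0.
  by rewrite mulr1; exact: set_mem xA.
apply: (Int_ext (Int_bdd (M := K) hci (measurable_funM mc mI) bq)) => x.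
by rewrite mulrA -expr2.
Qed.

Lemma c_L2 : L2 c.
Proof.
have mc : measurable_fun setT c := Gmeas_meas hcm.
split => //.
have [_ iy2] := hY.
set F := fun n : nat => [set x | `|c x| <= n%:R].
have mF n : measurable (F n) by exact: HG (Gset_abs _ hcm).
have ndF : nondecreasing_seq F.
  move=> m n mn; apply/subsetPset => x; rewrite /F /= => h.
  by apply: le_trans h _; rewrite ler_nat.
have UF : \bigcup_n F n = setT.
  apply/seteqP; split => // x _.
  exists (Num.Def.archi_bound `|c x|) => //; rewrite /F /=.
  exact/ltW/archi_boundP.
have mf2 : measurable_fun setT (fun x => c x ^+ 2) by exact: measurable_funX.
have h : (\int[P]_(x in F i) (c x ^+ 2)%:E)%E @[i --> \oo] -->
    (\int[P]_(x in \bigcup_i F i) (c x ^+ 2)%:E)%E.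
  apply: ge0_nondecreasing_set_cvg_integral => //.
    move=> i; apply/measurable_funTS/measurable_EFinP; exact: mf2.
  by move=> i x _; rewrite lee_fin sqr_ge0.
rewrite UF in h.
have le n : (\int[P]_(x in F n) (c x ^+ 2)%:E <= (E (fun x => Y x ^+ 2))%:E)%E.
  have := c_trunc_bound (ler0n _ n); rewrite -/(F n) => hle.
  have iq := Int_trunc (ler0n R n); rewrite -/(F n) in iq.
  rewrite integral_mkcond.
  rewrite (eq_integral (fun x => (c x ^+ 2 * \1_(F n) x)%:E)); last first.
    move=> x _; rewrite /patch indicE; case: (_ \in _) => /=.
      by rewrite mulr1.
    by rewrite mulr0.
  by rewrite -(fineK (integrable_fin_num measurableT iq)) lee_fin.
have hle : (\int[P]_(x in setT) (c x ^+ 2)%:E <= (E (fun x => Y x ^+ 2))%:E)%E.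
  rewrite -(cvg_lim _ h) //; apply: lime_le; first exact: cvgP h.
  exact: nearW.
apply/integrableP; split; first exact/measurable_EFinP.
apply: le_lt_trans (_ : (E (fun x => Y x ^+ 2))%:E < +oo)%E; last exact: ltry.
apply: le_trans hle; rewrite le_eqVlt; apply/orP; left; apply/eqP.
by apply: eq_integral => x _ /=; rewrite ger0_norm // sqr_ge0.
Qed.


Lemma orth (h : T -> R) : Gmeas h -> L2 h -> E (fun x => (Y x - c x) * h x) = 0.
Proof.
move=> hm hL.
have iV : L2 (fun x => Y x - c x) := L2_sub hY c_L2.
set f := fun x => (Y x - c x) * h x.
have fi : Int f := L2_mul iV hL.
set A := fun n : nat => [set x | `|h x| <= n%:R].
have mA n : measurable (A n) by exact: HG (Gset_abs _ hm).
have mh := Gmeas_meas hm.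
have mI n : measurable_fun setT (\1_(A n) : T -> R) by exact: measurable_indic.
have zero n : E (fun x => f x * \1_(A n) x) = 0.
  have b x : `|h x * \1_(A n) x| <= n%:R.
    rewrite indicE; case: (boolP (x \in A n)) => xA; last by rewrite mulr0 normr0.
    by rewrite mulr1; exact: set_mem xA.
  have i1 : Int (fun x => Y x * (h x * \1_(A n) x)).
    exact: (Int_bdd (M := n%:R)) hYi (measurable_funM mh (mI n)) b.
  have i2 : Int (fun x => c x * (h x * \1_(A n) x)).
    exact: (Int_bdd (M := n%:R)) hci (measurable_funM mh (mI n)) b.
  rewrite (E_ext (g := fun x => Y x * (h x * \1_(A n) x) - c x * (h x * \1_(A n) x))); last first.
    by move=> x; rewrite /f !mulrBl !mulrA.
  by rewrite E_sub // (BL2 hm (ler0n R n)) subrr.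
have mf := Int_meas fi.
have f_f : {ae P, forall x, setT x ->
    (fun n => (f x * \1_(A n) x)%:E) @ \oo --> (EFin \o f) x}.
  apply: aeW => x _; apply: cvg_near_cst.
  exists (Num.Def.archi_bound `|h x|) => // n /= hn.
  rewrite indicE mem_set ?mulr1 //; rewrite /A /=.
  apply: le_trans (ltW (archi_boundP (normr_ge0 _))) _.
  by rewrite ler_nat.
have f_g : {ae P, forall x n, setT x ->
    (`|(f x * \1_(A n) x)%:E| <= (`|f x|)%:E)%E}.
  apply: aeW => x n _ /=; rewrite lee_fin normrM.
  rewrite indicE; case: (_ \in _); rewrite ?normr1 ?normr0 ?mulr1 ?mulr0 //.
have [_ _ hcv] := dominated_convergence (mu := P) (@measurableT _ T)
  (f_ := fun n x => (f x * \1_(A n) x)%:E) (f := EFin \o f)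
  (g := fun x => (`|f x|)%:E)
  (fun n => (measurable_EFinP _ _).2 (measurable_funM mf (mI n)))
  ((measurable_EFinP _ _).2 mf) f_f (Int_abs fi) f_g.
have e : (fun n => \int[P]_(x in setT) (f x * \1_(A n) x)%:E)%E = (fun _ => 0%E).
  apply: funext => n.
  have iA : Int (fun x => f x * \1_(A n) x).
    by apply: (Int_bdd (M := 1)) fi (mI n) _ => x; rewrite indicE; case: (_ \in _);
      rewrite ?normr1 ?normr0.
  by rewrite -(fineK (integrable_fin_num measurableT iA)) -[fine _]/(E _) zero.
rewrite e in hcv.
have := cvg_lim _ hcv; rewrite lim_cst // => h0.
by rewrite /E /Rintegral -h0.
Qed.

End CE.

End Basics.

Section LA.
Context {R : realType} {p : nat}.

Lemma pd_psd (S : 'M[R]_p) : pos_def S -> nonneg_def S.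
Proof.
move=> hS v; have [->|v0] := eqVneq v 0.
  by rewrite trmx0 !mul0mx mxE.
exact/ltW/hS.
Qed.

Lemma pd_unit (S : 'M[R]_p) : S^T = S -> pos_def S -> S \in unitmx.
Proof.
move=> sS hS; rewrite -row_free_unit; apply: inj_row_free => v hv.
apply/eqP; apply/negPn/negP => v0.
have vT0 : v^T != 0 by rewrite -(inj_eq (@trmx_inj _ _ _)) trmxK trmx0.
have := hS _ vT0.
rewrite trmxK hv mul0mx mxE ltxx //=.
Qed.

Lemma pd_add (S T : 'M[R]_p) : pos_def S -> nonneg_def T -> pos_def (S + T).
Proof.
move=> hS hT v v0; rewrite mulmxDr mulmxDl mxE.
exact: ltr_wpDr (hT v) (hS v v0).
Qed.

Lemma la_main (S T : 'M[R]_p) :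
  S^T = S -> T^T = T -> pos_def S -> nonneg_def T ->
  nonneg_def (invmx S - invmx (S + T)) /\ (invmx (S + T) = invmx S -> T = 0).
Proof.
move=> sS sT hS hT.
have uS := pd_unit sS hS.
have hST := pd_add hS hT.
have sST : (S + T)^T = S + T by rewrite linearD /= sS sT.
have uST := pd_unit sST hST.
split; last first.
  move=> /(congr1 invmx); rewrite !invmxK => /eqP.
  by rewrite -subr_eq0 addrC addKr => /eqP.
move=> v.
set x := invmx S *m v; set y := invmx (S + T) *m v.
have vx : S *m x = v by rewrite mulKVmx.
have vy : (S + T) *m y = v by rewrite mulKVmx.
have key : v^T *m (invmx S - invmx (S + T)) *m v =
  (x - y)^T *m S *m (x - y) + y^T *m T *m y.
  have e1 : v^T *m (invmx S - invmx (S + T)) *m v = v^T *m x - v^T *m y.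
    by rewrite mulmxBr mulmxBl !mulmxA.
  have e2 : v^T = x^T *m S by rewrite -{1}vx trmx_mul sS.
  have e3 : v^T = y^T *m (S + T) by rewrite -{1}vy trmx_mul sST.
  have e4 : y^T *m v = v^T *m y.
    rewrite -[v in LHS]trmxK -trmx_mul; apply/matrixP => i j.
    by rewrite mxE (ord1 i) (ord1 j).
  rewrite e1 [(x - y)^T]linearB /= !mulmxBl -e2.
  have e5 : y^T *m S *m x = y^T *m v by rewrite -mulmxA vx.
  have e6 : y^T *m T *m y = v^T *m y - y^T *m S *m y.
    by rewrite e3 mulmxDr mulmxDl addrC addKr.
  by rewrite e6 !mulmxBr e5 e4 subrK.
rewrite key mxE.
apply: addr_ge0; [exact: pd_psd|exact: hT].
Qed.

End LA.

Lemma sym_smm {d0 : measure_display} {Omega : measurableType d0} {R : realType}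
  (P : probability Omega R) (p : nat) (U : 'I_p -> Omega -> R) :
  (second_moment_mx P U)^T = second_moment_mx P U.
Proof.
apply/matrixP => i j; rewrite !mxE; congr (Ex P _); apply: funext => x.
by rewrite mulrC.
Qed.

Theorem theorem2 (d0 : measure_display) (Omega : measurableType d0)
  (R : realType) (P : probability Omega R) (p d : nat)
  (Y eps : Omega -> R) (X : 'I_p -> Omega -> R) (Z : 'I_d -> Omega -> R)
  (beta0 : 'I_p -> R) (m0Z : Omega -> R) (g0 g0' : R -> R)
  (condX eta : 'I_p -> Omega -> R) :
  (* data model  Y = X^T beta0 + m0(Z) + eps *)
  (forall j, X j \in Lfun P 2%:E) ->
  (forall k, measurable_fun setT (Z k)) ->
  measurable_fun setT eps ->
  measurable_wrt (sigma_gen Z) m0Z ->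
  (forall w, Y w = \sum_(j < p) X j w * beta0 j + m0Z w + eps w) ->
  (* Z supported in [0,1]^d *)
  P [set w | forall k, 0 <= Z k w <= 1] = 1%E ->
  (* eps independent of (X, Z) *)
  indep_of P eps (sigma_gen (fun i : 'I_(p + d) =>
                    match fintype.split i with inl j => X j | inr k => Z k end)) ->
  (* eps has a symmetric, absolutely continuous density g0 with finite
     Fisher information *)
  has_density P eps g0 ->
  (forall x, g0 (- x) = g0 x) ->
  abs_cont_with_deriv g0 g0' ->
  (fisher_info_e g0 g0' < +oo)%E ->
  (* condX j = E0(X_j | Z) and eta j = projection of condX j onto H(q0) *)
  (forall j, is_cond_exp P (sigma_gen Z) (X j) (condX j)) ->
  (forall j, is_proj_additive P Z (condX j) (eta j)) ->
  let Ig := fisher_info g0 g0' in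
  let Iadd := Ig *: second_moment_mx P (fun j w => X j w - eta j w) in
  let IPL := Ig *: second_moment_mx P (fun j w => X j w - condX j w) in
  let M := second_moment_mx P (fun j w => eta j w - condX j w) in
  pos_def IPL ->
  (M != 0 -> loewner_lt (invmx Iadd) (invmx IPL)) /\
  (M = 0 -> invmx Iadd = invmx IPL).
Proof.
move=> hX hZ _ _ _ _ _ _ _ _ _ hce hproj Ig Iadd IPL M hpd.
set Hs := \big[setU/set0]_(i < d) preimage_set_system setT (Z i) measurable.
have HG : forall A, <<s Hs >> A -> measurable A.
  apply: smallest_sub (sigma_algebra_measurable _) _.
  apply: (big_ind (fun S : set (set Omega) => S `<=` measurable)) => //.
    by move=> S1 S2 h1 h2 A [/h1|/h2].
  move=> i _ A [B mB <-]; exact: (hZ i) measurableT B mB.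
have sub1 k : sigma_gen1 (Z k) `<=` <<s Hs >>.
  apply: smallest_sub (smallest_sigma_algebra _ _) _ => A hA.
  apply: sub_sigma_algebra; rewrite /Hs (bigD1 k) //=; by left.
have wrtG f : measurable_wrt (sigma_gen Z) f ->
    @measurable_fun _ _ (g_sigma_algebraType Hs) R setT f.
  by move=> hw _ B mB; rewrite setTI; exact: hw B mB.
have ce j : [/\ @measurable_fun _ _ (g_sigma_algebraType Hs) R setT (condX j),
    P.-integrable setT (EFin \o condX j) &
    forall A, <<s Hs >> A ->
      E P (fun x => X j x * \1_A x) = E P (fun x => condX j x * \1_A x)].
  have [hw hl hs] := hce j; split.
  - exact: wrtG.
  - exact/Lfun1_integrable.
  - by move=> A hA; rewrite !E_indic; [rewrite (hs A hA) | exact: HG | exact: HG].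
have L2X j : L2 P (X j) := Lfun2_L2 (hX j).
have L2c j : L2 P (condX j).
  have [h1 h2 h3] := ce j; exact: (c_L2 (P:=P) (H:=Hs) HG (L2X j) h1 h2 h3).
have heta j : @measurable_fun _ _ (g_sigma_algebraType Hs) R setT (eta j) /\
    L2 P (eta j).
  have [[ck [hck heq]] _] := hproj j; split.
    have m1 : @measurable_fun _ _ (g_sigma_algebraType Hs) R setT
        (fun x => \sum_k ck k x).
      apply: measurable_sum => k; have [hw _ _] := hck k.
      by move=> _ B mB; apply: sub1; rewrite setTI; exact: hw B mB.
    by apply: eq_measurable_fun m1 => x _; rewrite heq.
  apply: (@L2_ext _ _ _ P (fun x => \sum_(k < d) ck k x)); last by move=> x; rewrite heq.
  apply: L2_sum => k; have [_ h _] := hck k; exact: Lfun2_L2.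
set V := fun i x => X i x - condX i x.
set W := fun i x => eta i x - condX i x.
have L2V i : L2 P (V i) := L2_sub (L2X i) (L2c i).
have L2W i : L2 P (W i) := L2_sub (heta i).2 (L2c i).
have GW i : @measurable_fun _ _ (g_sigma_algebraType Hs) R setT (W i).
  apply: measurable_funB; first exact: (heta i).1.
  by have [] := ce i.
have cross i j : E P (fun x => V i x * W j x) = 0.
  have [h1 h2 h3] := ce i.
  exact: (orth (P:=P) (H:=Hs) HG (L2X i) h1 h2 h3 (GW j) (L2W j)).
set B := second_moment_mx P (fun j w => X j w - condX j w).
have hA : second_moment_mx P (fun j w => X j w - eta j w) = B + M.
  apply/matrixP => i j; rewrite !mxE !ExE.
  rewrite (@E_ext _ _ _ P _ (fun x => (V i x * V j x + W i x * W j x) -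
     (V i x * W j x + V j x * W i x))); last first.
    by move=> x; rewrite /V /W; ring.
  rewrite E_sub; last 2 first.
  - by apply: Int_add; apply: L2_mul.
  - by apply: Int_add; apply: L2_mul.
  rewrite E_add; [|exact: L2_mul|exact: L2_mul].
  rewrite E_add; [|exact: L2_mul|exact: L2_mul].
  by rewrite !cross addr0 subr0.
have eIadd : Iadd = IPL + Ig *: M by rewrite /Iadd hA scalerDr.
have Ig0 : 0 <= Ig.
  rewrite /Ig /fisher_info; apply: fine_ge0; apply: integral_ge0 => x /= hx.
  by rewrite lee_fin divr_ge0 // ?sqr_ge0 // ltW.
have sS : IPL^T = IPL by rewrite /IPL linearZ /= sym_smm.
have sT : (Ig *: M)^T = Ig *: M by rewrite linearZ /= sym_smm.
have nT : nonneg_def (Ig *: M).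
  move=> v; rewrite -scalemxAr -scalemxAl mxE quad_form //.
  by apply: mulr_ge0 => //; apply: E_ge0 => x; exact: sqr_ge0.
have [hpsd hstr] := la_main sS sT hpd nT.
rewrite eIadd; split; last first.
  by move=> ->; rewrite scaler0 addr0.
move=> M0; split => //.
apply/negP => /eqP /hstr /eqP; rewrite scalemx_eq0 (negbTE M0) orbF => /eqP Ig00.
have v0 : (const_mx 1 : 'cV[R]_p) != 0.
  apply/negP => /eqP hv; move/negP: M0; apply; apply/eqP/matrixP => i j.
  by have := congr1 (fun A : 'cV[R]_p => A i ord0) hv; rewrite !mxE => /eqP; rewrite oner_eq0.
have := hpd _ v0; rewrite /IPL Ig00 scale0r mulmx0 mul0mx mxE ltxx.
by [].
Qed.
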